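(* Let $P_n,P^*\in\Delta(\Delta(V))$ with $P_n\to P^*$ weakly. For $p\in\mathbb{R}$ and $P\in\Delta(\Delta(V))$ define $\pi(p,P)=\int_{\{\nu:\ \mathbb{E}_\nu[v]\ge p\}}(p-\mathbb{E}_\nu[c(v)])\,dP(\nu)$. Then for all $p\in\mathbb{R}$ and $\delta>0$, $$\limsup_{n\to\infty}\pi(p+\delta,P_n)-\delta\ \le\ \pi(p,P^* )\ \le\ \liminf_{n\to\infty}\pi(p-\delta,P_n)+\delta.$$
   Context: $V\subset\mathbb{R}$ is compact and $c:V\to\mathbb{R}$ is continuous with $v-c(v)\ge0$ for all $v\in V$. $\Delta(V)$ is the set of Borel probability measures on $V$ with the weak topology, and $\Delta(\Delta(V))$ the Borel probability measures on $\Delta(V)$, with weak convergence. *)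

(* Defs.v *)
From HB Require Import structures.
From mathcomp Require Import all_boot all_order all_algebra.
From mathcomp Require Import all_classical all_reals all_analysis.
Set Implicit Arguments. Unset Strict Implicit. Unset Printing Implicit Defensive.
Import Order.TTheory GRing.Theory Num.Theory.
Import numFieldNormedType.Exports.
Local Open Scope classical_set_scope.
Local Open Scope ring_scope.

Section DeltaV.
Context {R : realType}.

Definition bcont (f : R -> R) : Prop :=
  continuous f /\ exists M : R, forall x, `|f x| <= M.

(* Delta(V): Borel probability measures on R concentrated on V
   (V is compact, hence closed, so this is Delta(V) viewed inside Delta(R)). *)
Definition inDV (V : set R) (nu : probability R R) : Prop := nu (~` V) = 0%E.

(* the carrier; v0 \in V is used only to make the (nonempty) type pointed *)
Definition DV (V : set R) (v0 : R) (hv0 : V v0) := {nu : probability R R | inDV V nu}.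

Variables (V : set R) (v0 : R) (hv0 : V v0).

Lemma dirac_inDV : inDV V (\d_v0 : probability R R).
Proof. rewrite /inDV /= diracE memNset //=; by move=> /(_ hv0). Qed.

HB.instance Definition _ := gen_eqMixin (DV hv0).
HB.instance Definition _ := gen_choiceMixin (DV hv0).
HB.instance Definition _ := isPointed.Build (DV hv0) (exist _ _ dirac_inDV).

Definition ival (f : R -> R) (nu : DV hv0) : R := Rintegral (sval nu) setT f.

Definition weak_nbhs (nu : DV hv0) (A : set (DV hv0)) : Prop :=
  exists (n : nat) (fs : 'I_n -> R -> R) (e : R),
    0 < e /\ (forall i, bcont (fs i)) /\
    [set mu | forall i, `|ival (fs i) mu - ival (fs i) nu| < e] `<=` A.

Definition weak_open (A : set (DV hv0)) : Prop :=
  forall nu, A nu -> weak_nbhs nu A.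

Notation DVmeas := (g_sigma_algebraType weak_open).

Definition DDV := probability DVmeas R.

Definition wcontinuous (F : DV hv0 -> R) : Prop :=
  forall nu e, 0 < e -> weak_nbhs nu [set mu | `|F mu - F nu| < e].

Definition weak_conv (Pn : nat -> DDV) (P : DDV) : Prop :=
  forall F : DV hv0 -> R, wcontinuous F -> (exists M : R, forall nu, `|F nu| <= M) ->
    (fun n => Rintegral (Pn n) setT (F : DVmeas -> R)) @ \oo -->
      Rintegral P setT (F : DVmeas -> R).

Definition expect (nu : DV hv0) (f : R -> R) : R := Rintegral (sval nu) setT f.

Definition profit (c : R -> R) (p : R) (P : DDV) : \bar R :=
  (\int[P]_(nu in [set nu : DVmeas | (p <= expect nu id)%R])
      (p - expect nu c)%R%:E)%E.

End DeltaV.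

(* Main.v *)
Require Import Defs.
From HB Require Import structures.
From mathcomp Require Import all_boot all_order all_algebra.
From mathcomp Require Import all_classical all_reals all_analysis.
From mathcomp Require Import measurable_realfun.
Import Order.TTheory GRing.Theory Num.Theory.
Import numFieldNormedType.Exports.
Local Open Scope classical_set_scope.
Local Open Scope ring_scope.
Section L0.
Local Open Scope ereal_scope.
Context d (T : measurableType d) (R : realType) (mu : {measure set T -> \bar R}).
Import HBNNSimple.

Lemma ge0_int_le_null (N : set T) (f g : T -> \bar R) :
  measurable N -> mu N = 0 -> (forall x, 0 <= f x) -> (forall x, 0 <= g x) ->
  (forall x, ~ N x -> f x = g x) ->
  \int[mu]_x f x <= \int[mu]_x g x.
Proof.
move=> mN N0 f0 g0 fg.
rewrite (ge0_integralTE _ f0) (ge0_integralTE _ g0).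
apply/ge_ereal_sup => _ [h /= hf <-].
have mCN : measurable (~` N) by exact: measurableC.
pose h' := proj_nnsfun h mCN.
apply: (@le_trans _ _ (sintegral mu h')); last first.
  apply: ereal_sup_ubound; exists h' => // x /=.
  rewrite mindicE; case: (pselect (N x)) => Nx.
    by rewrite /= memNset // mulr0.
  by rewrite mem_set //= mulr1 -fg.
rewrite le_eqVlt; apply/orP; left; apply/eqP.
have := integral_nnsfun mu measurableT h; rewrite patch_setT => <-.
have := integral_nnsfun mu measurableT h'; rewrite patch_setT => <-.
apply: ae_eq_integral => //.
- by apply/measurable_EFinP; exact: measurable_funP.
- by apply/measurable_EFinP; exact: measurable_funP.
exists N; split => // x /= Hx; apply: contrapT => Nx; apply: Hx => _.
by rewrite /mindic indicE mem_set //= mulr1.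
Qed.

Lemma int_eq_null (N : set T) (f g : T -> \bar R) :
  measurable N -> mu N = 0 -> (forall x, ~ N x -> f x = g x) ->
  \int[mu]_x f x = \int[mu]_x g x.
Proof.
move=> mN N0 fg; rewrite integralE [in RHS]integralE.
have E1 : \int[mu]_x f^\+ x = \int[mu]_x g^\+ x.
  apply/le_anti/andP; split; apply: (ge0_int_le_null _ _ _ mN N0) => // x Nx;
    by [move=> ?; exact: funepos_ge0 | rewrite !funeposE fg].
have E2 : \int[mu]_x f^\- x = \int[mu]_x g^\- x.
  apply/le_anti/andP; split; apply: (ge0_int_le_null _ _ _ mN N0) => // x Nx;
    by [move=> ?; exact: funeneg_ge0 | rewrite !funenegE fg].
by rewrite E1 E2.
Qed.
End L0.
Lemma bnd_compact {R : realType} (A : set R) : compact A ->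
  exists M : R, 0 < M /\ forall x, A x -> `|x| <= M.
Proof.
move=> /compact_bounded [M [Mr HM]].
exists (`|M| + 1); split; first by rewrite ltr_pwDr.
move=> x Ax; apply: (HM (`|M| + 1)) => //.
by rewrite (le_lt_trans (real_ler_norm Mr)) // ltrDl.
Qed.

Lemma ext_bcont (R : realType) (A : set R) (f : R -> R) : compact A ->
  {within A, continuous f} -> exists g, bcont g /\ (forall x, A x -> f x = g x).
Proof.
move=> cA cf.
have [M [M0 HM]] := @bnd_compact R (f @` A) (continuous_compact cf cA).
have [] := @continuous_bounded_extension R R (@pseudometric_normal R R) A
  (compact_closed (@Rhausdorff R) cA) (f : R -> R^o) M M0 cf.
  by move=> x Ax; apply: HM; exists x.
move=> g [fg cg gM]; exists g; split; first by split => //; exists M.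
by move=> x Ax; apply: fg; rewrite inE.
Qed.

From mathcomp Require Import ring lra.
Section Cont.
Context (R : realType).
Lemma cont_aff (a b : R) : continuous (fun x : R => a * x + b).
Proof.
move=> x; apply: (@cvgD _ R^o); last exact: cvg_cst.
by apply: cvgM; [exact: cvg_cst | exact: cvg_id].
Qed.
Lemma cont_sq (a : R) : continuous (fun x : R => a * x ^+ 2).
Proof.
move=> x; apply: cvgM; first exact: cvg_cst.
exact: exprn_continuous.
Qed.
Lemma cont_clamp (q dl : R) :
  continuous (fun x : R => Num.min 1 (Num.max 0 ((x - q) / dl))).
Proof.
move=> x.
have -> : (fun x : R => Num.min 1 (Num.max 0 ((x - q) / dl))) =
   ((fun=> 1) \min ((fun=> 0) \max (fun x : R => dl^-1 * x + (- q / dl)))).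
  apply: funext => y /=; congr (Num.min _ (Num.max _ _)). by rewrite mulrBl mulrC mulNr.
apply: (@continuous_min R R); first exact: cvg_cst.
apply: (@continuous_max R R); first exact: cvg_cst.
exact: cont_aff.
Qed.
Lemma cont_min0 (q : R) : continuous (fun x : R => Num.min 0 (q - x)).
Proof.
move=> x.
have -> : (fun x : R => Num.min 0 (q - x)) =
   ((fun=> 0) \min (fun x : R => (-1) * x + q)).
  by apply: funext => y /=; rewrite mulN1r addrC.
apply: (@continuous_min R R); first exact: cvg_cst.
exact: cont_aff.
Qed.
End Cont.
Arguments cont_aff {R}. Arguments cont_sq {R}. Arguments cont_clamp {R}. Arguments cont_min0 {R}.
Section Main.
Context {R : realType} {V : set R} {v0 : R} {hv0 : V v0}.
Local Notation D := (DV hv0).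

Definition pc (g1 g2 : R -> R) (F : D -> R) := forall nu e, 0 < e ->
  exists2 dl, 0 < dl & forall mu, `|ival g1 mu - ival g1 nu| < dl ->
    `|ival g2 mu - ival g2 nu| < dl -> `|F mu - F nu| < e.

Lemma pc_wcont g1 g2 F : bcont g1 -> bcont g2 -> pc g1 g2 F -> wcontinuous F.
Proof.
move=> b1 b2 H nu e e0; have [dl dl0 Hd] := H nu e e0.
exists 2%N, (fun i : 'I_2 => if val i == 0%N then g1 else g2), dl; split => //; split.
  by move=> i; case: ifP.
move=> mu /= Hmu; apply: Hd.
  by have := Hmu ord0.
by have := Hmu (Ordinal (isT : (1 < 2)%N)).
Qed.

Section pcs.
Variables g1 g2 : R -> R.

Lemma pc_ext F G : (forall nu, F nu = G nu) -> pc g1 g2 F -> pc g1 g2 G.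
Proof. by move=> FG; rewrite (funext FG). Qed.

Lemma pc_cst a : pc g1 g2 (fun _ => a).
Proof. by move=> nu e e0; exists 1 => // mu _ _; rewrite subrr normr0. Qed.

Lemma pc_1 : pc g1 g2 (ival g1).
Proof. by move=> nu e e0; exists e. Qed.

Lemma pc_2 : pc g1 g2 (ival g2).
Proof. by move=> nu e e0; exists e. Qed.

Lemma pc_add F G : pc g1 g2 F -> pc g1 g2 G -> pc g1 g2 (fun nu => F nu + G nu).
Proof.
move=> HF HG nu e e0.
have e20 : 0 < e / 2 by rewrite divr_gt0.
have [d1 d10 H1] := HF nu _ e20; have [d2 d20 H2] := HG nu _ e20.
exists (Num.min d1 d2); first by rewrite lt_min d10 d20.
move=> mu; rewrite !lt_min => /andP[a1 a2] /andP[b1 b2].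
rewrite (splitr e) (le_lt_trans _ (ltrD (H1 _ a1 b1) (H2 _ a2 b2))) //.
by rewrite opprD addrACA ler_normD.
Qed.

Lemma pc_comp (phi : R -> R) F : continuous phi -> pc g1 g2 F ->
  pc g1 g2 (fun nu => phi (F nu)).
Proof.
move=> cphi HF nu e e0.
have := cphi (F nu); move/cvgrPdist_lt => /(_ e e0).
case/nbhs_ballP => dl dl0 Hb.
have [d1 d10 H1] := HF nu _ dl0.
exists d1 => // mu a b; rewrite distrC; apply: Hb.
by rewrite /ball /= distrC; apply: H1.
Qed.

Lemma pc_mul F G : pc g1 g2 F -> pc g1 g2 G -> pc g1 g2 (fun nu => F nu * G nu).
Proof.
move=> HF HG.
apply: (@pc_ext (fun nu => 4^-1 * (F nu + G nu) ^+ 2 + (- 4^-1) * (F nu + (-1) * G nu) ^+ 2)).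
  by move=> nu; field.
have H1 : pc g1 g2 (fun nu => F nu + G nu) by exact: pc_add.
have H2 := pc_comp _ _ (cont_aff (-1) 0) HG.
have H3 : pc g1 g2 (fun nu => F nu + ((-1) * G nu + 0)) by exact: pc_add.
have H4 := pc_comp _ _ (cont_sq 4^-1) H1.
have H5 := pc_comp _ _ (cont_sq (- 4^-1)) H3.
apply: pc_ext (pc_add _ _ H4 H5) => nu /=; by rewrite addr0.
Qed.
End pcs.
End Main.

Section Gen.
Context d (T : measurableType d) (R : realType) (P : probability T R).

Lemma bnd_int (f : T -> R) (M : R) : measurable_fun setT f ->
  (forall x, `|f x| <= M) -> P.-integrable setT (EFin \o f).
Proof.
move=> mf fM; apply: measurable_bounded_integrable => //.
  by apply: (le_lt_trans (probability_le1 P measurableT)); rewrite ltry.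
exists M; split; rewrite ?num_real // => y My x _ /=.
  by rewrite (le_trans (fM x)) // ltW.
Qed.
Lemma fine_probT : fine ((P : {measure set T -> \bar R}) setT) = 1.
Proof.
by rewrite (_ : (P : {measure set T -> \bar R}) setT = 1%E) //; exact: probability_setT.
Qed.
End Gen.

Section M3.
Context {R : realType} {V : set R} {v0 : R} {hv0 : V v0}.
Local Notation D := (DV hv0).
Local Notation T := (g_sigma_algebraType (@weak_open R V v0 hv0)).

Lemma wcont_meas (F : D -> R) : wcontinuous F -> measurable_fun [set: T] (F : T -> R).
Proof.
move=> cF; apply: (measurability _ (RGenInftyO.measurableE R)) => _ [_ [x ->] <-].
rewrite setTI; apply: sub_sigma_algebra => nu /=; rewrite in_itv /= => Hnu.
have e0 : 0 < x - F nu by rewrite subr_gt0.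
have [n [fs [e [e00 [bc sub]]]]] := cF nu _ e0.
exists n, fs, e; split => //; split => // mu /sub /= H.
rewrite in_itv /=; rewrite -subr_gt0.
have := ler_norm (F mu - F nu); move: H; lra.
Qed.

Lemma expect_ival (cV : compact V) (f g : R -> R) (nu : D) :
  (forall x, V x -> f x = g x) -> expect nu f = ival g nu.
Proof.
move=> fg; rewrite /expect /ival /Rintegral; congr fine.
apply: (@int_eq_null _ _ _ _ _ _ _ (measurableC (compact_measurable cV))).
  exact: (svalP nu).
move=> x /= nVx; congr EFin; apply: fg.
by apply: contrapT.
Qed.

Lemma ival_ge0V (cV : compact V) (g : R -> R) (nu : D) :
  (forall x, V x -> 0 <= g x) -> 0 <= ival g nu.
Proof.
move=> g0; rewrite -(@expect_ival cV (fun x => Num.max (g x) 0)).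
  by apply: Rintegral_ge0 => x _; rewrite le_max lexx orbT.
by move=> x Vx; rewrite max_l // g0.
Qed.

Lemma bcont_int (g : R -> R) (nu : D) : bcont g ->
  (sval nu).-integrable setT (EFin \o g).
Proof.
case=> cg [M HM]; apply: (@bnd_int _ _ _ _ _ M) => //.
exact: continuous_measurable_fun.
Qed.

Lemma ivalB (f g : R -> R) (nu : D) : bcont f -> bcont g ->
  ival (fun x => f x - g x) nu = ival f nu - ival g nu.
Proof.
move=> bf bg; rewrite /ival; apply: RintegralB => //; exact: bcont_int.
Qed.

Lemma ival_abs (g : R -> R) (M : R) (nu : D) : bcont g ->
  (forall x, `|g x| <= M) -> `|ival g nu| <= M.
Proof.
move=> bg gM; rewrite /ival.
apply: (le_trans (le_normr_Rintegral _ _)) => //; first exact: bcont_int.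
apply: (le_trans (le_Rintegral (f2 := fun=> M) _ _ _ _)) => //.
- apply: (@bnd_int _ _ _ _ _ M); last by move=> x; rewrite normr_id.
  apply: measurableT_comp => //; case: bg => cg _.
  exact: continuous_measurable_fun.
- apply: (@bnd_int _ _ _ _ _ `|M|) => //.
- rewrite Rintegral_cst //.
  by rewrite fine_probT mulr1.
Qed.
End M3.

Section Lim.
Context {R : realType}.
Local Open Scope ereal_scope.

Lemma le_limn_esup (u v : nat -> \bar R) : (forall n, u n <= v n) ->
  limn_esup u <= limn_esup v.
Proof.
move=> uv; rewrite !limn_esup_lim; apply: lee_lim; [exact: is_cvg_esups|exact: is_cvg_esups|].
apply: nearW => n; apply: ge_ereal_sup => _ [k kn <-]; apply: le_ereal_sup_tmp.
by exists (v k); [exists k|exact: uv].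
Qed.

Lemma le_limn_einf (u v : nat -> \bar R) : (forall n, u n <= v n) ->
  limn_einf u <= limn_einf v.
Proof.
move=> uv; rewrite /limn_einf leeN2; apply: le_limn_esup => n /=.
by rewrite leeN2.
Qed.

Lemma EFin_cvgn (a : nat -> R) (A : R) : (a @ \oo --> A)%R ->
  (fun n => (a n)%:E) @ \oo --> A%:E.
Proof. by move=> ha; apply: cvg_EFin; [exact: nearW | exact: ha]. Qed.

Lemma limn_esup_EFin (a : nat -> R) (A : R) : (a @ \oo --> A)%R ->
  limn_esup (fun n => (a n)%:E) = A%:E.
Proof.
move=> ha; have hu : (fun n => (a n)%:E) @ \oo --> A%:E by exact: EFin_cvgn.
by rewrite is_cvg_limn_esupE ?(cvg_lim _ hu) //; apply/cvg_ex; exists A%:E.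
Qed.

Lemma limn_einf_EFin (a : nat -> R) (A : R) : (a @ \oo --> A)%R ->
  limn_einf (fun n => (a n)%:E) = A%:E.
Proof.
move=> ha; have hu : (fun n => (a n)%:E) @ \oo --> A%:E by exact: EFin_cvgn.
by rewrite is_cvg_limn_einfE ?(cvg_lim _ hu) //; apply/cvg_ex; exists A%:E.
Qed.
End Lim.

Section Fin.
Context {R : realType} {V : set R} {v0 : R} {hv0 : V v0}.
Local Notation D := (DV hv0).
Local Notation T := (g_sigma_algebraType (@weak_open R V v0 hv0)).

Lemma int_patch (P : DDV hv0) (S : set T) (f : T -> R) (M : R) :
  measurable S -> measurable_fun setT f -> (forall x, `|f x| <= M) ->
  (\int[P]_(x in S) (f x)%:E = (Rintegral P setT (f \_ S))%:E)%E /\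
  P.-integrable setT (EFin \o (f \_ S)).
Proof.
move=> mS mf fM.
have mfS : measurable_fun setT (f \_ S).
  by apply/(measurable_restrictT _ mS); exact: measurable_funS mf.
have iS : P.-integrable setT (EFin \o (f \_ S)).
  apply: (@bnd_int _ _ _ _ _ M mfS) => x; rewrite patchE; case: ifP => _.
    exact: fM.
  by rewrite normr0 (le_trans _ (fM x)).
split => //; rewrite integral_mkcond /Rintegral fineK; last first.
  exact: integrable_fin_num.
by congr integral; apply: funext => x; rewrite !patchE; case: ifP.
Qed.

Lemma meas_ge (m : T -> R) (q : R) : measurable_fun setT m ->
  measurable [set x : T | q <= m x].
Proof.
move=> mm; have := mm measurableT _ (measurable_itv `[q, +oo[); rewrite setTI.
by congr measurable; apply/seteqP; split => x /=; rewrite in_itv /= andbT.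
Qed.
End Fin.

Section Gen2.
Context d (T : measurableType d) (R : realType) (P : probability T R).
Lemma Rint_cst_int (a : R) : P.-integrable setT (EFin \o (fun _ : T => a)).
Proof. by apply: (@bnd_int _ _ _ _ _ `|a|) => //; exact: measurable_cst. Qed.

Lemma RintB_cst (f : T -> R) (a : R) : P.-integrable setT (EFin \o f) ->
  Rintegral P setT (fun x => f x - a) = Rintegral P setT f - a.
Proof.
move=> fi; rewrite RintegralB //; last exact: Rint_cst_int.
by rewrite Rintegral_cst // fine_probT mulr1.
Qed.

Lemma RintD_cst (f : T -> R) (a : R) : P.-integrable setT (EFin \o f) ->
  Rintegral P setT (fun x => f x + a) = Rintegral P setT f + a.
Proof.
move=> fi; rewrite RintegralD //; last exact: Rint_cst_int.
by rewrite Rintegral_cst // fine_probT mulr1.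
Qed.
Lemma intB_cst (f : T -> R) (a : R) : P.-integrable setT (EFin \o f) ->
  P.-integrable setT (EFin \o (fun x => f x - a)).
Proof.
move=> fi; have := integrableB measurableT fi (Rint_cst_int a).
by apply: eq_integrable => // x _ /=; rewrite EFinB.
Qed.
Lemma intD_cst (f : T -> R) (a : R) : P.-integrable setT (EFin \o f) ->
  P.-integrable setT (EFin \o (fun x => f x + a)).
Proof.
move=> fi; have := integrableD measurableT fi (Rint_cst_int a).
by apply: eq_integrable => // x _ /=; rewrite EFinD.
Qed.
End Gen2.

Section Pw.
Context {R : realType}.
Definition cl (x : R) := Num.min 1 (Num.max 0 x).
Lemma cl_01 x : 0 <= cl x <= 1.
Proof.
rewrite /cl; apply/andP; split.
  by rewrite le_min ler01 le_max lexx.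
by rewrite ge_min lexx.
Qed.
Lemma cl_0 x : x <= 0 -> cl x = 0.
Proof. by move=> x0; rewrite /cl max_l // min_r // ler01. Qed.
Lemma cl_1 x : 1 <= x -> cl x = 1.
Proof. by move=> x1; rewrite /cl max_r ?(le_trans ler01) // min_l. Qed.

Lemma pw_a (q dl m e : R) : 0 < dl -> e <= m ->
  let t := cl ((m - q) / dl) in
  let H := t * (q - e) + (1 - t) * Num.min 0 (q - m) in
  ((if q + dl <= m then q + dl - e else 0) - dl <= H) /\
  (H <= (if q <= m then q - e else 0)).
Proof.
move=> dl0 em t H; have /andP[t0 t1] := cl_01 ((m - q) / dl).
rewrite -/t in t0 t1.
have [qm|mq] := leP q m.
- rewrite /H min_r; last lra.
  have [qdm|mqd] := leP (q + dl) m.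
  + have -> : t = 1 by apply: cl_1; rewrite ler_pdivlMr // mul1r lerBrDl.
    split; lra.
  + split; nra.
- rewrite /H; have -> : t = 0 by apply: cl_0; rewrite ler_pdivrMr // mul0r; lra.
  rewrite min_l; last lra.
  have [qdm|mqd] := leP (q + dl) m; first lra.
  split; lra.
Qed.

Lemma pw_b (q dl m e : R) : 0 < dl -> e <= m ->
  let t := cl ((m - (q - dl)) / dl) in
  let H := t * (q - e) in
  ((if q <= m then q - e else 0) <= H) /\
  (H <= (if q - dl <= m then q - dl - e else 0) + dl).
Proof.
move=> dl0 em t H; have /andP[t0 t1] := cl_01 ((m - (q - dl)) / dl).
rewrite -/t in t0 t1.
have [qm|mq] := leP q m.
- rewrite /H; have -> : t = 1 by apply: cl_1; rewrite ler_pdivlMr // mul1r; lra.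
  rewrite ifT; [split; lra | lra].
- have [qdm|mqd] := leP (q - dl) m.
  + split; rewrite /H; nra.
  + rewrite /H; have -> : t = 0 by apply: cl_0; rewrite ler_pdivrMr // mul0r; lra.
    split; lra.
Qed.
End Pw.

Theorem lemmaH1 (R : realType) (V : set R) (v0 : R) (hv0 : V v0) (c : R -> R) :
  compact V ->
  {within V, continuous c} ->
  (forall v, V v -> 0 <= v - c v) ->
  forall (Pn : nat -> DDV hv0) (Pstar : DDV hv0),
  weak_conv Pn Pstar ->
  forall (p delta : R), 0 < delta ->
    (limn_esup (fun n => profit c (p + delta) (Pn n)) - delta%:E
       <= profit c p Pstar)%E /\
    (profit c p Pstar
       <= limn_einf (fun n => profit c (p - delta) (Pn n)) + delta%:E)%E.
Proof.
move=> cV cc hvc Pn Ps wc p dl dl0.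
have cid : {within V, continuous (fun x : R => x)}.
  by apply: continuous_subspaceT => x; exact: cvg_id.
have [gid [bid fid]] := @ext_bcont R V _ cV cid.
have [gc [bc fc]] := @ext_bcont R V _ cV cc.
have [Mi HMi] := bid.2.
have [Mc HMc] := bc.2.
pose m := @ival R V v0 hv0 gid.
pose e := @ival R V v0 hv0 gc.
have mB nu : `|m nu| <= Mi by apply: ival_abs.
have eB nu : `|e nu| <= Mc by apply: ival_abs.
have em nu : e nu <= m nu.
  have := @ival_ge0V R V v0 hv0 cV (fun x => gid x - gc x) nu.
  rewrite ivalB // subr_ge0; apply => x Vx; rewrite -fid // -fc //; exact: hvc.
have Eid nu : expect nu id = m nu by apply: expect_ival.
have Ec nu : expect nu c = e nu by apply: expect_ival.
have pm : pc gid gc m by exact: pc_1.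
have pe : pc gid gc e by exact: pc_2.
have wcF (F : DV hv0 -> R) : pc gid gc F -> wcontinuous F by exact: pc_wcont.
have mF (F : DV hv0 -> R) : pc gid gc F -> measurable_fun setT (F : g_sigma_algebraType (@weak_open R V v0 hv0) -> R).
  by move=> /wcF; exact: wcont_meas.
pose S q := [set nu : g_sigma_algebraType (@weak_open R V v0 hv0) | q <= m nu].
pose G q := (fun nu => q - e nu) \_ (S q).
have mS q : measurable (S q) := @meas_ge R V v0 hv0 m q (mF _ pm).
have pcq q : pc gid gc (fun nu => q - e nu).
  apply: (pc_ext _ _ _ _ ^~ (pc_comp _ _ _ _ (cont_aff (-1) q) pe)) => nu.
  by rewrite mulN1r addrC.
have HG q (P : DDV hv0) : (profit c q P = (Rintegral P setT (G q))%:E :> \bar R) /\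
    P.-integrable setT (EFin \o G q).
  have [I1 I2] := @int_patch R V v0 hv0 P (S q) _ (`|q| + Mc) (mS q) (mF _ (pcq q))
    (fun nu => le_trans (ler_normB _ _) (lerD (lexx _) (eB nu))).
  split => //; rewrite -I1 /profit.
  have -> : [set nu : g_sigma_algebraType (@weak_open R V v0 hv0) | q <= @expect R V v0 hv0 nu id] = S q.
    by apply/seteqP; split => nu /=; rewrite Eid.
  by apply: eq_integral => nu _; rewrite Ec.
have Mi0 : 0 <= Mi by apply: le_trans (HMi 0); exact: normr_ge0.
have Mc0 : 0 <= Mc by apply: le_trans (HMc 0); exact: normr_ge0.
pose t q nu := cl ((m nu - q) / dl).
pose h q nu := t q nu * (q - e nu) + (1 - t q nu) * Num.min 0 (q - m nu).
pose h' q nu := t (q - dl) nu * (q - e nu).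
have pt q : pc gid gc (t q).
  by apply: (pc_ext _ _ _ _ ^~ (pc_comp _ _ _ _ (cont_clamp q dl) pm)).
have ph q : pc gid gc (h q).
  have p1 := pc_mul _ _ _ _ (pt q) (pcq q).
  have p2 := pc_comp _ _ _ _ (cont_aff (-1) 1) (pt q).
  have p3 := pc_comp _ _ _ _ (cont_min0 q) pm.
  have p4 := pc_mul _ _ _ _ p2 p3.
  apply: (pc_ext _ _ _ _ ^~ (pc_add _ _ _ _ p1 p4)) => nu.
  by rewrite /h mulN1r (addrC (- _)).
have ph' q : pc gid gc (h' q) by exact: (pc_mul _ _ _ _ (pt _) (pcq q)).
have Bq q nu : -(`|q| + Mc) <= q - e nu <= `|q| + Mc.
  have := eB nu; rewrite ler_norml => /andP[a b].
  have /andP[q1 q2] : -`|q| <= q <= `|q| by rewrite -ler_norml.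
  by apply/andP; split; lra.
have Bm q nu : -(`|q| + Mi) <= Num.min 0 (q - m nu) <= `|q| + Mi.
  have := mB nu; rewrite ler_norml => /andP[a b].
  have /andP[q1 q2] : -`|q| <= q <= `|q| by rewrite -ler_norml.
  apply/andP; split; first by rewrite le_min; apply/andP; split; lra.
  by rewrite ge_min; apply/orP; left; lra.
pose K (q : R) : R := `|q| + Mi + Mc.
have hB (q : R) (nu : DV hv0) : `|h q nu| <= K q.
  have /andP[t0 t1] := cl_01 ((m nu - q) / dl).
  have /andP[a1 a2] := Bq q nu; have /andP[b1 b2] := Bm q nu.
  rewrite ler_norml /h /t /K; apply/andP; split; nra.
have h'B (q : R) (nu : DV hv0) : `|h' q nu| <= K q.
  have /andP[t0 t1] := cl_01 ((m nu - (q - dl)) / dl).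
  have /andP[a1 a2] := Bq q nu.
  rewrite ler_norml /h' /t /K; apply/andP; split; nra.
have GE q nu : G q nu = if q <= m nu then q - e nu else 0.
  rewrite /G patchE; case: ifPn => [/set_mem /= -> // | /negP H].
  by case: ifPn => // qm; exfalso; apply: H; exact: mem_set.
have iG q (P : DDV hv0) := (HG q P).2.
have ih q (P : DDV hv0) : P.-integrable setT (EFin \o h q).
  exact: (@bnd_int _ _ _ P _ (K q) (mF _ (ph q)) (hB q)).
have ih' q (P : DDV hv0) : P.-integrable setT (EFin \o h' q).
  exact: (@bnd_int _ _ _ P _ (K q) (mF _ (ph' q)) (h'B q)).
have Ia q (P : DDV hv0) : Rintegral P setT (G (q + dl)) - dl <= Rintegral P setT (h q) /\
    Rintegral P setT (h q) <= Rintegral P setT (G q).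
  rewrite -(@RintB_cst _ _ _ P _ dl (iG (q + dl) P)); split.
    apply: le_Rintegral; [by []|exact: intB_cst|exact: ih|].
    by move=> nu _; change (G (q + dl) nu - dl <= h q nu); rewrite GE; exact: (@pw_a _ q dl _ _ dl0 (em nu)).1.
  apply: le_Rintegral; [by []|exact: ih|exact: iG|].
  by move=> nu _; change (h q nu <= G q nu); rewrite GE; exact: (@pw_a _ q dl _ _ dl0 (em nu)).2.
have Ib q (P : DDV hv0) : Rintegral P setT (G q) <= Rintegral P setT (h' q) /\
    Rintegral P setT (h' q) <= Rintegral P setT (G (q - dl)) + dl.
  rewrite -(@RintD_cst _ _ _ P _ dl (iG (q - dl) P)); split.
    apply: le_Rintegral; [by []|exact: iG|exact: ih'|].
    by move=> nu _; change (G q nu <= h' q nu); rewrite GE; exact: (@pw_b _ q dl _ _ dl0 (em nu)).1.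
  apply: le_Rintegral; [by []|exact: ih'|exact: intD_cst|].
  by move=> nu _; change (h' q nu <= G (q - dl) nu + dl); rewrite GE; exact: (@pw_b _ q dl _ _ dl0 (em nu)).2.
have cvh := wc (h p) (wcF _ (ph p)) (ex_intro _ (K p) (hB p)).
have cvh' := wc (h' p) (wcF _ (ph' p)) (ex_intro _ (K p) (h'B p)).
split.
- have le1 n : (profit c (p + dl) (Pn n) <= (Rintegral (Pn n) setT (h p) + dl)%:E)%E.
    rewrite (HG _ _).1 lee_fin; have := (Ia p (Pn n)).1; lra.
  have := le_limn_esup (fun n => profit c (p + dl) (Pn n)) (fun n => (Rintegral (Pn n) setT (h p) + dl)%:E) le1; move=> H.
  have cv1 : (fun n => Rintegral (Pn n) setT (h p) + dl) @ \oo --> (Rintegral Ps setT (h p) + dl).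
    exact: (cvgD cvh (cvg_cst dl)).
  rewrite (limn_esup_EFin _ _ cv1) in H.
  rewrite leeBlDr // (HG p Ps).1; apply: (le_trans H).
  by rewrite -EFinD lee_fin lerD2r; exact: (Ia p Ps).2.
- have le2 n : ((Rintegral (Pn n) setT (h' p) - dl)%:E <= profit c (p - dl) (Pn n))%E.
    rewrite (HG _ _).1 lee_fin; have := (Ib p (Pn n)).2; lra.
  have := le_limn_einf (fun n => (Rintegral (Pn n) setT (h' p) - dl)%:E) (fun n => profit c (p - dl) (Pn n)) le2; move=> H.
  have cv1 : (fun n => Rintegral (Pn n) setT (h' p) - dl) @ \oo --> (Rintegral Ps setT (h' p) - dl).
    exact: (cvgB cvh' (cvg_cst dl)).
  rewrite (limn_einf_EFin _ _ cv1) in H.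
  rewrite (HG p Ps).1; apply: le_trans (leeD2r dl%:E H).
  by rewrite -EFinD subrK lee_fin; exact: (Ib p Ps).1.
Qed.
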